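(* Let $\mathcal S=(s_\alpha)_{\alpha\in L(\omega_1)}$ be a ladder system on $\omega_1$ and let $K_{\mathcal S}=\omega_1\cup\{\infty\}$ be the associated ladder system space. Let $A$ be a nonstationary subset of $L(\omega_1)$ and let $\xi:A\to L(\omega_1)$ be an injective map. Then $\xi$ extends to a continuous map $\phi:K_{\mathcal S}\to K_{\mathcal S}$ such that $\phi(\infty)=\infty$ and $\phi(\alpha)=\infty$ for every $\alpha\in L(\omega_1)\setminus A$.
   Context: $L(\omega_1)$ denotes the set of limit ordinals in $\omega_1$ (the first uncountable ordinal) and $S(\omega_1)=\omega_1\setminus L(\omega_1)$. A ladder system on $\omega_1$ is a family $\mathcal S=(s_\alpha)_{\alpha\in L(\omega_1)}$ where for each limit $\alpha$, $s_\alpha=\{s^n_\alpha:n\in\omega\}$ and $(s^n_\alpha)_{n\in\omega}$ is a strictly increasing sequence in $S(\omega_1)$ converging (in the order sense) to $\alpha$. The ladder system topology $\tau_{\mathcal S}$ on $\omega_1$ is the topology in which every element of $S(\omega_1)$ is isolated and the basic neighborhoods of a limit ordinal $\alpha$ are the sets $\{\alpha\}\cup B$ with $B$ a cofinite subset of $s_\alpha$. This is a locally compact Hausdorff space, and $K_{\mathcal S}=\omega_1\cup\{\infty\}$ is its one-point compactification. A subset of $\omega_1$ is nonstationary if it is disjoint from some closed unbounded subset of $\omega_1$. *)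

(* Defs.v *)
(* omega_1 is modelled abstractly: any strictly well-ordered,
   uncountable type all of whose proper initial segments are countable
   (this characterizes omega_1 up to order isomorphism). *)
From Stdlib Require Import List.

Record Omega1 : Type := {
  ocarrier :> Type;
  olt : ocarrier -> ocarrier -> Prop;
  olt_irrefl : forall x, ~ olt x x;
  olt_trans : forall x y z, olt x y -> olt y z -> olt x z;
  olt_total : forall x y, olt x y \/ x = y \/ olt y x;
  olt_wf : well_founded olt;
  o_uncountable : ~ exists f : ocarrier -> nat, forall x y, f x = f y -> x = y;
  o_initial_countable : forall a, exists f : ocarrier -> nat,
      forall x y, olt x a -> olt y a -> f x = f y -> x = y
}.

Section Defs.
Variable W : Omega1.
Notation "x < y" := (olt W x y).

Definition ole (x y : W) : Prop := x < y \/ x = y.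

Definition is_limit (a : W) : Prop :=
  (exists b, b < a) /\ forall b, b < a -> exists c, b < c /\ c < a.

(* s : W -> nat -> W, where s a n = s^n_a (only meaningful for limit a) *)
Definition ladder_system (s : W -> nat -> W) : Prop :=
  forall a, is_limit a ->
    (forall n, ~ is_limit (s a n)) /\
    (forall n m, (n < m)%nat -> s a n < s a m) /\
    (forall n, s a n < a) /\
    (forall b, b < a -> exists n, b < s a n).

Definition ls_open (s : W -> nat -> W) (U : W -> Prop) : Prop :=
  forall a, is_limit a -> U a -> exists N, forall n, (N <= n)%nat -> U (s a n).

Definition ls_compact (s : W -> nat -> W) (C : W -> Prop) : Prop :=
  forall (I : Type) (U : I -> W -> Prop),
    (forall i, ls_open s (U i)) ->
    (forall x, C x -> exists i, U i x) ->
    exists l : list I, forall x, C x -> exists i, In i l /\ U i x.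

(* K_S = omega_1 ∪ {∞}, with None = ∞; open sets of the one-point
   compactification: open sets of omega_1, and sets containing ∞ whose
   trace on omega_1 is open with compact complement. *)
Definition K_open (s : W -> nat -> W) (V : option W -> Prop) : Prop :=
  ls_open s (fun x => V (Some x)) /\
  (V None -> ls_compact s (fun x => ~ V (Some x))).

Definition K_continuous (s : W -> nat -> W) (phi : option W -> option W) : Prop :=
  forall V, K_open s V -> K_open s (fun x => V (phi x)).

Definition club (C : W -> Prop) : Prop :=
  (forall a, exists c, C c /\ ole a c) /\
  (forall a, is_limit a -> (forall b, b < a -> exists c, C c /\ b < c /\ c < a) -> C a).

Definition nonstationary (A : W -> Prop) : Prop :=
  exists C, club C /\ forall x, C x -> ~ A x.

End Defs.

(* Main.v *)
Require Import Defs.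
From Stdlib Require Import List Arith Lia Classical ClassicalEpsilon.

Lemma my_choice {X Y : Type} (R : X -> Y -> Prop) :
  (forall x, exists y, R x y) -> exists f : X -> Y, forall x, R x (f x).
Proof.
  intros H. exists (fun x => proj1_sig (constructive_indefinite_description _ (H x))).
  intro x. apply (proj2_sig (constructive_indefinite_description _ (H x))).
Qed.

Lemma lt_neq (W : Omega1) (x y : W) : olt W x y -> x <> y.
Proof. intros h e; subst; apply (olt_irrefl W y h). Qed.

Lemma min_exists (W : Omega1) (P : W -> Prop) :
  (exists x, P x) -> exists x, P x /\ forall y, P y -> ~ olt W y x.
Proof.
  intros [x0 Hx0].
  apply NNPP; intro Hn.
  assert (forall x, ~ P x) as HnP.
  { intro x. induction x as [x IH] using (well_founded_ind (olt_wf W)).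
    intro Px. apply Hn. exists x. split; auto. intros y Py Hy. exact (IH y Hy Py). }
  exact (HnP x0 Hx0).
Qed.

Lemma s_mono (W : Omega1) s a n m : ladder_system W s -> is_limit W a ->
  (n <= m)%nat -> s a n = s a m \/ olt W (s a n) (s a m).
Proof.
  intros Hl Ha Hnm. destruct (le_lt_eq_dec _ _ Hnm) as [h|h].
  - right. apply (proj1 (proj2 (Hl a Ha))). exact h.
  - left. subst. reflexivity.
Qed.

Lemma s_lt_ge (W : Omega1) s a b N n : ladder_system W s -> is_limit W a ->
  olt W b (s a N) -> (N <= n)%nat -> olt W b (s a n).
Proof.
  intros Hl Ha Hb Hn. destruct (s_mono W s a N n Hl Ha Hn) as [e|h].
  - rewrite <- e; exact Hb.
  - exact (olt_trans W _ _ _ Hb h).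
Qed.

Lemma avoid (W : Omega1) s a b : ladder_system W s -> is_limit W a -> is_limit W b ->
  a <> b -> exists N, forall n, (N <= n)%nat -> forall m, s a n <> s b m.
Proof.
  intros Hl Ha Hb Hab.
  destruct (Hl a Ha) as [Ha1 [Ha2 [Ha3 Ha4]]].
  destruct (Hl b Hb) as [Hb1 [Hb2 [Hb3 Hb4]]].
  destruct (olt_total W a b) as [ab|[e|ba]].
  - destruct (Hb4 a ab) as [m0 Hm0].
    assert (Hk : forall k, exists N, forall n, (N <= n)%nat -> forall m, (m < k)%nat -> s a n <> s b m).
    { induction k as [|k [N IH]].
      - exists 0. intros; lia.
      - destruct (olt_total W (s b k) a) as [h|[h|h]].
        + destruct (Ha4 _ h) as [N' HN'].
          exists (max N N'). intros n hn m hm.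
          destruct (Nat.eq_dec m k) as [->|ne].
          * apply not_eq_sym, lt_neq. apply (s_lt_ge W s a _ N' n Hl Ha HN'). lia.
          * apply IH; lia.
        + exfalso. apply (Hb1 k). rewrite h. exact Ha.
        + exists N. intros n hn m hm.
          destruct (Nat.eq_dec m k) as [->|ne].
          * apply lt_neq. exact (olt_trans W _ _ _ (Ha3 n) h).
          * apply IH; lia. }
    destruct (Hk m0) as [N HN]. exists N. intros n hn m.
    destruct (lt_dec m m0) as [h|h].
    + apply HN; auto.
    + apply lt_neq. apply (olt_trans W _ a). apply Ha3.
      apply (s_lt_ge W s b a m0 m Hl Hb Hm0). lia.
  - contradiction.
  - destruct (Ha4 b ba) as [N HN]. exists N. intros n hn m.
    apply not_eq_sym, lt_neq. apply (olt_trans W _ b). apply Hb3.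
    apply (s_lt_ge W s a b N n Hl Ha HN hn).
Qed.

Lemma compact_limits_finite (W : Omega1) s K : ladder_system W s -> ls_compact W s K ->
  exists l, forall x, K x -> is_limit W x -> In x l.
Proof.
  intros Hl HK.
  destruct (HK W (fun i x => x = i \/ (is_limit W i /\ exists n, s i n = x))) as [l Hlst].
  - intros i a Ha [e|[Hi [n e]]].
    + subst. exists 0. intros n _. right. split; eauto.
    + exfalso. apply (proj1 (Hl i Hi) n). rewrite e. exact Ha.
  - intros x _. exists x. left; reflexivity.
  - exists l. intros x Kx Lx. destruct (Hlst x Kx) as [i [Hi [e|[Li [n e]]]]].
    + subst; auto.
    + exfalso. apply (proj1 (Hl i Li) n). rewrite e. exact Lx.
Qed.

Lemma compact_one (W : Omega1) s (Q : W -> Prop) b (I : Type) (U : I -> W -> Prop) :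
  ladder_system W s -> is_limit W b -> Q b ->
  (forall i, ls_open W s (U i)) -> (forall x, Q x -> exists i, U i x) ->
  exists l, forall x, Q x -> (x = b \/ exists n, s b n = x) -> exists i, In i l /\ U i x.
Proof.
  intros Hl Hb Qb Uo Ucov.
  destruct (Ucov b Qb) as [i0 Hi0].
  destruct (Uo i0 b Hb Hi0) as [N HN].
  assert (Hfin : forall k, exists l, forall n, (n < k)%nat -> Q (s b n) -> exists i, In i l /\ U i (s b n)).
  { induction k as [|k [l IH]].
    - exists nil. intros; lia.
    - destruct (classic (Q (s b k))) as [q|q].
      + destruct (Ucov _ q) as [i' Hi']. exists (i' :: l). intros n hn qn.
        destruct (Nat.eq_dec n k) as [->|ne].
        * exists i'. split; simpl; auto.
        * destruct (IH n ltac:(lia) qn) as [i [Hi1 Hi2]]. exists i; split; simpl; auto.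
      + exists l. intros n hn qn.
        destruct (Nat.eq_dec n k) as [->|ne]; [contradiction|].
        apply IH; auto; lia. }
  destruct (Hfin N) as [l Hl2]. exists (i0 :: l).
  intros x Qx [e|[n e]].
  - subst. exists i0. split; simpl; auto.
  - subst. destruct (lt_dec n N) as [h|h].
    + destruct (Hl2 n h Qx) as [i [Hi1 Hi2]]. exists i; split; simpl; auto.
    + exists i0. split; simpl; auto. apply HN. lia.
Qed.

Lemma compact_of_ladders (W : Omega1) s (Q : W -> Prop) (F : list W) :
  ladder_system W s ->
  (forall b, In b F -> is_limit W b /\ Q b) ->
  (forall x, Q x -> exists b, In b F /\ (x = b \/ exists n, s b n = x)) ->
  ls_compact W s Q.
Proof.
  intros Hl HF HQ I U Uo Ucov.
  assert (Hgen : forall F, (forall b, In b F -> is_limit W b /\ Q b) ->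
     exists l, forall x, Q x -> (exists b, In b F /\ (x = b \/ exists n, s b n = x)) ->
        exists i, In i l /\ U i x).
  { clear HF HQ. induction F0 as [|b F0 IH]; intros HF.
    - exists nil. intros x _ [b [[] _]].
    - destruct (HF b (or_introl eq_refl)) as [Lb Qb].
      destruct (compact_one W s Q b I U Hl Lb Qb Uo Ucov) as [l1 H1].
      destruct IH as [l2 H2]. { intros b' Hb'. apply HF. simpl; auto. }
      exists (l1 ++ l2). intros x Qx [b' [[e|Hin] Hx]].
      + subst b'. destruct (H1 x Qx Hx) as [i [Hi1 Hi2]]. exists i; split; auto. apply in_or_app; auto.
      + destruct (H2 x Qx (ex_intro _ b' (conj Hin Hx))) as [i [Hi1 Hi2]].
        exists i; split; auto. apply in_or_app; auto. }
  destruct (Hgen F HF) as [l Hl']. exists l. intros x Qx. apply Hl'; auto.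
Qed.

Theorem theorem3 (W : Omega1) (s : W -> nat -> W) (A : W -> Prop) (xi : W -> W) :
  ladder_system W s ->
  (forall a, A a -> is_limit W a) ->
  nonstationary W A ->
  (forall a, A a -> is_limit W (xi a)) ->
  (forall a b, A a -> A b -> xi a = xi b -> a = b) ->
  exists phi : option W -> option W,
    K_continuous W s phi /\
    phi None = None /\
    (forall a, A a -> phi (Some a) = Some (xi a)) /\
    (forall a, is_limit W a -> ~ A a -> phi (Some a) = None).
Proof.
  intros Hl HAl [C [[Hunb Hcl] HCA]] Hxl Hxi.
  assert (Hc : forall a, exists c, A a -> C c /\ olt W a c /\
                 forall c', C c' -> olt W a c' -> ~ olt W c' c).
  { intro a. destruct (classic (A a)) as [Aa|nA]; [|exists a; tauto].
    assert (ex1 : exists c, C c /\ olt W a c).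
    { destruct (Hunb a) as [c [Cc [h|e]]].
      + exists c; auto.
      + subst. exfalso. exact (HCA c Cc Aa). }
    destruct (min_exists W (fun c => C c /\ olt W a c) ex1) as [c [[Cc Hac] Hm]].
    exists c. intros _. refine (conj Cc (conj Hac _)). intros c' Cc' h. apply Hm; auto. }
  destruct (my_choice _ Hc) as [cf Hcf]. clear Hc.
  assert (Hb : forall a, exists b, A a -> olt W b a /\
                 forall c', C c' -> ~ (olt W b c' /\ olt W c' a)).
  { intro a. destruct (classic (A a)) as [Aa|nA]; [|exists a; tauto].
    destruct (classic (exists b, olt W b a /\ forall c', C c' -> ~ (olt W b c' /\ olt W c' a)))
      as [[b Hb]|Hn].
    - exists b; auto.
    - exfalso. apply (HCA a); auto. apply Hcl; auto. intros b hb.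
      apply NNPP; intro hn. apply Hn. exists b. split; auto.
      intros c' Cc' [h1 h2]. apply hn. exists c'. auto. }
  destruct (my_choice _ Hb) as [bf Hbf]. clear Hb.
  destruct (my_choice _ (o_initial_countable W)) as [en Hen].
  assert (HN : forall a, exists N, A a ->
     (forall n, (N <= n)%nat -> olt W (bf a) (s a n)) /\
     (forall b, A b -> cf b = cf a -> (en (cf a) b < en (cf a) a)%nat ->
         forall n, (N <= n)%nat -> forall m, s a n <> s b m)).
  { intro a. destruct (classic (A a)) as [Aa|nA]; [|exists 0; tauto].
    destruct (Hcf a Aa) as [Cca [Hac Hcm]]. destruct (Hbf a Aa) as [Hba Hbm].
    destruct (proj2 (proj2 (proj2 (Hl a (HAl a Aa)))) _ Hba) as [N1 HN1].
    assert (Hk : forall k, exists N, forall b, A b -> cf b = cf a -> (en (cf a) b < k)%nat ->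
              en (cf a) b <> en (cf a) a ->
              forall n, (N <= n)%nat -> forall m, s a n <> s b m).
    { induction k as [|k [N IH]].
      - exists 0. intros; lia.
      - destruct (classic (exists b0, A b0 /\ cf b0 = cf a /\ en (cf a) b0 = k /\ k <> en (cf a) a))
          as [[b0 [Ab0 [e0 [k0 nk]]]]|nex].
        + assert (b0 <> a) by (intro; subst; contradiction).
          destruct (avoid W s a b0 Hl (HAl a Aa) (HAl b0 Ab0) (not_eq_sym H)) as [N' HN'].
          exists (max N N'). intros b Ab eb hk hne n hn m.
          destruct (Nat.eq_dec (en (cf a) b) k) as [ek|nek].
          * assert (b = b0).
            { apply (Hen (cf a)).
              - rewrite <- eb. apply (Hcf b Ab).
              - rewrite <- e0. apply (Hcf b0 Ab0).
              - congruence. }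
            subst b. apply HN'; lia.
          * apply IH; auto; lia.
        + exists N. intros b Ab eb hk hne n hn m.
          destruct (Nat.eq_dec (en (cf a) b) k) as [ek|nek].
          * exfalso. apply nex. exists b. repeat split; auto. congruence.
          * apply IH; auto; lia. }
    destruct (Hk (en (cf a) a)) as [N2 HN2].
    exists (max N1 N2). intros _. split.
    - intros n hn. apply (s_lt_ge W s a _ N1 n Hl (HAl a Aa) HN1). lia.
    - intros b Ab eb hlt n hn m. apply (HN2 b Ab eb hlt); [lia|lia]. }
  destruct (my_choice _ HN) as [Nf HNf]. clear HN.
  assert (Hdis0 : forall a b, A a -> A b -> olt W a b -> forall n m,
             (Nf a <= n)%nat -> (Nf b <= m)%nat -> s a n <> s b m).
  { intros a b Aa Ab hab n m hn hm.
    destruct (Hcf a Aa) as [Cca [Hac Hcma]]. destruct (Hcf b Ab) as [Ccb [Hbc Hcmb]].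
    destruct (HNf a Aa) as [Ha1 Ha2]. destruct (HNf b Ab) as [Hb1 Hb2].
    destruct (classic (cf a = cf b)) as [e|ne].
    - assert (en (cf a) a <> en (cf a) b).
      { intro h. apply (lt_neq W a b hab). apply (Hen (cf a)); auto. rewrite e; auto. }
      destruct (lt_dec (en (cf a) b) (en (cf a) a)) as [h|h].
      + apply (Ha2 b Ab (eq_sym e) h n hn m).
      + apply not_eq_sym. apply (Hb2 a Aa e). rewrite <- e. lia. exact hm.
    - assert (hcb : olt W (cf a) b).
      { destruct (olt_total W (cf a) b) as [h|[h|h]]; auto.
        - subst. exfalso. exact (HCA _ Cca Ab).
        - exfalso. apply ne.
          destruct (olt_total W (cf a) (cf b)) as [h1|[h1|h1]]; auto.
          + exfalso. exact (Hcmb _ Cca h h1).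
          + exfalso. exact (Hcma _ Ccb (olt_trans W _ _ _ hab Hbc) h1). }
      destruct (Hbf b Ab) as [Hbb Hbm].
      assert (hle : olt W (cf a) (s b m)).
      { destruct (olt_total W (bf b) (cf a)) as [h|[h|h]].
        - exfalso. exact (Hbm _ Cca (conj h hcb)).
        - rewrite <- h. apply Hb1; auto.
        - exact (olt_trans W _ _ _ h (Hb1 m hm)). }
      apply lt_neq. apply (olt_trans W _ a); [apply (proj1 (proj2 (proj2 (Hl a (HAl a Aa))))) |].
      exact (olt_trans W _ _ _ Hac hle). }
  assert (Hdis : forall a b, A a -> A b -> a <> b -> forall n m,
             (Nf a <= n)%nat -> (Nf b <= m)%nat -> s a n <> s b m).
  { intros a b Aa Ab hne n m hn hm.
    destruct (olt_total W a b) as [h|[h|h]].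
    - apply Hdis0; auto.
    - contradiction.
    - apply not_eq_sym. apply Hdis0; auto. }
  set (tin := fun b x => A b /\ exists n, (Nf b <= n)%nat /\ s b n = x).
  assert (tin_uniq : forall b b' x, tin b x -> tin b' x -> b = b').
  { intros b b' x [Ab [n [hn e]]] [Ab' [n' [hn' e']]].
    apply NNPP; intro hne. apply (Hdis b b' Ab Ab' hne n n' hn hn'). congruence. }
  assert (tin_nl : forall b x, tin b x -> ~ is_limit W x).
  { intros b x [Ab [n [hn e]]]. subst. apply (proj1 (Hl b (HAl b Ab))). }
  set (phi := fun o : option W => match o with None => None | Some x =>
     match excluded_middle_informative (A x) with
     | left _ => Some (xi x)
     | right _ => match excluded_middle_informative (exists b, tin b x) with
        | left H => Some (xi (proj1_sig (constructive_indefinite_description _ H)))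
        | right _ => None end end end).
  assert (phiA : forall a, A a -> phi (Some a) = Some (xi a)).
  { intros a Aa. unfold phi. destruct (excluded_middle_informative (A a)); [reflexivity|contradiction]. }
  assert (phiT : forall b x, tin b x -> phi (Some x) = Some (xi b)).
  { intros b x Hb. unfold phi. destruct (excluded_middle_informative (A x)) as [Ax|nAx].
    - exfalso. exact (tin_nl b x Hb (HAl x Ax)).
    - destruct (excluded_middle_informative (exists b, tin b x)) as [Hex|Hn].
      + f_equal. f_equal. apply (tin_uniq _ _ x); [|exact Hb].
        exact (proj2_sig (constructive_indefinite_description _ Hex)).
      + exfalso. apply Hn. exists b; exact Hb. }
  assert (phiN : forall x, ~ A x -> ~ (exists b, tin b x) -> phi (Some x) = None).
  { intros x nA nT. unfold phi. destruct (excluded_middle_informative (A x)); [contradiction|].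
    destruct (excluded_middle_informative (exists b, tin b x)); [contradiction|reflexivity]. }
  assert (phiS : forall x y, phi (Some x) = Some y ->
            exists b, A b /\ y = xi b /\ (x = b \/ exists n, s b n = x)).
  { intros x y e. destruct (classic (A x)) as [Ax|nA].
    - rewrite (phiA x Ax) in e. injection e; intro; subst. exists x. auto.
    - destruct (classic (exists b, tin b x)) as [[b Hb]|nT].
      + rewrite (phiT b x Hb) in e. injection e; intro; subst. exists b.
        destruct Hb as [Ab [n [_ en']]]. split; auto. split; auto. right; eauto.
      + rewrite (phiN x nA nT) in e. discriminate. }
  assert (phiL : forall a, is_limit W a -> ~ A a -> phi (Some a) = None).
  { intros a La nA. apply phiN; auto. intros [b Hb]. exact (tin_nl b a Hb La). }
  exists phi. split; [|split; [reflexivity|split; auto]].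
  intros V [V1 V2]. split.
  - intros a La Va. destruct (classic (A a)) as [Aa|nA].
    + exists (Nf a). intros n hn. rewrite (phiA a Aa) in Va.
      rewrite (phiT a (s a n)); [exact Va|]. split; auto. exists n; auto.
    + rewrite (phiL a La nA) in Va.
      destruct (compact_limits_finite W s _ Hl (V2 Va)) as [l Hlst].
      assert (Hc : forall l', exists N, forall n, (N <= n)%nat -> forall b, A b -> In (xi b) l' ->
                 forall m, s a n <> s b m).
      { induction l' as [|y l' [N IH]].
        - exists 0. intros n _ b _ [].
        - destruct (classic (exists b, A b /\ xi b = y)) as [[b0 [Ab0 e0]]|nex].
          + assert (a <> b0) by (intro; subst; contradiction).
            destruct (avoid W s a b0 Hl La (HAl b0 Ab0) H) as [N' HN'].
            exists (max N N'). intros n hn b Ab [e|Hin] m.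
            * assert (b = b0) by (apply Hxi; congruence). subst b. apply HN'; lia.
            * apply IH; auto; lia.
          + exists N. intros n hn b Ab [e|Hin] m.
            * exfalso. apply nex; eauto.
            * apply IH; auto. }
      destruct (Hc l) as [N HN]. exists N. intros n hn.
      destruct (classic (exists b, tin b (s a n))) as [[b Hb]|nT].
      * rewrite (phiT b _ Hb). apply NNPP; intro nv.
        destruct Hb as [Ab [m [_ em]]].
        apply (HN n hn b Ab (Hlst _ nv (Hxl b Ab)) m). auto.
      * rewrite phiN; auto. intro Ax. exact (proj1 (Hl a La) n (HAl _ Ax)).
  - intro HVN. simpl in HVN.
    destruct (compact_limits_finite W s _ Hl (V2 HVN)) as [l Hlst].
    assert (HF : forall l', exists F, (forall b, In b F -> A b /\ ~ V (Some (xi b))) /\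
               (forall b, A b -> ~ V (Some (xi b)) -> In (xi b) l' -> In b F)).
    { induction l' as [|y l' [F [IH1 IH2]]].
      - exists nil. split; [intros b []|intros b _ _ []].
      - destruct (classic (exists b, A b /\ ~ V (Some (xi b)) /\ xi b = y)) as [[b0 [Ab0 [nv0 e0]]]|nex].
        + exists (b0 :: F). split.
          * intros b [e|Hin]; [subst; auto|auto].
          * intros b Ab nv [e|Hin]; [left; apply Hxi; congruence|right; auto].
        + exists F. split; auto. intros b Ab nv [e|Hin]; [exfalso; apply nex; eauto|auto]. }
    destruct (HF l) as [F [HF1 HF2]].
    apply (compact_of_ladders W s _ F Hl).
    + intros b Hb. destruct (HF1 b Hb) as [Ab nv]. split; auto. rewrite phiA; auto.
    + intros x Qx. destruct (phi (Some x)) as [y|] eqn:E; [|contradiction].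
      destruct (phiS x y E) as [b [Ab [ey Hx]]]. subst y.
      exists b. split; auto.
Qed.
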